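(* Let $L_1,L_2$ be positive integers that are both multiples of $4$. Consider the honeycomb lattice on the $L_1\times L_2$ torus: sites $A(\bm R),B(\bm R)$ with $\bm R=m_1\bm a_1+m_2\bm a_2$, $m_\mu\in\mathbb Z/L_\mu\mathbb Z$, and bonds $A(\bm R)$–$B(\bm R)$ of type $c$, $A(\bm R)$–$B(\bm R-\bm a_1)$ of type $a$, $A(\bm R)$–$B(\bm R-\bm a_2)$ of type $b$. Assign to every bond of type $\alpha$ the link matrix $U_{ij}=U_{ji}=U^\alpha$ with $U^a=\tau^y\otimes I_2$, $U^b=-\tau^x\otimes\sigma^z$, $U^c=-\tau^x\otimes\sigma^y$. Let $C_1$ be the noncontractible loop $A(\bm 0)\to B(\bm 0)\to A(\bm a_1)\to B(\bm a_1)\to\cdots\to A(L_1\bm a_1)=A(\bm 0)$ (alternating $c$- and $a$-bonds) and $C_2$ the noncontractible loop $A(\bm 0)\to B(\bm 0)\to A(\bm a_2)\to\cdots\to A(\bm 0)$ (alternating $c$- and $b$-bonds). Then the ordered products of link matrices along $C_1$ and along $C_2$ both equal $I_4$, every elementary hexagon has product $-I_4$, and there exist unitary matrices $g_j$ and signs $\eta_{ij}=\eta_{ji}\in\{\pm1\}$ with $g_iU_{ij}g_j^\dagger=\eta_{ij}I_4$ for every bond of the torus, such that the Hubbard model $-\frac{t}{\sqrt3}\sum_{\langle ij\rangle}\psi_i^\dagger U_{ij}\psi_j+h.c.+\frac U2\sum_j\psi_j^\dagger\psi_j(\psi_j^\dagger\psi_j-1)$ is mapped by $\psi_j\to g_j\psi_j$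 to an explicitly $\mathrm{SU}(4)$-symmetric $\pi$-flux Hubbard model with $\prod_{\langle ij\rangle\in p}\eta_{ij}=-1$ for every hexagon $p$ and $\prod_{\langle ij\rangle\in C_\mu}\eta_{ij}=+1$ for $\mu=1,2$.
   Context: Pauli matrices $\boldsymbol\tau$ act on the first and $\boldsymbol\sigma$ on the second factor of $\mathbb C^2\otimes\mathbb C^2$; $t,U$ are real; $\psi_j$ are four-component fermionic spinors. A gauge transformation acts by $\psi_j\to g_j\psi_j$, $U_{ij}\to g_iU_{ij}g_j^\dagger$. *)

(* Defs.v *)
From HB Require Import structures.
From mathcomp Require Import all_boot all_order all_algebra.
From mathcomp Require Import algC spectral sesquilinear.
From mathcomp Require Import mxtens.

Set Implicit Arguments.
Unset Strict Implicit.
Unset Printing Implicit Defensive.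
Import Order.TTheory GRing.Theory Num.Theory Num.Def.
Local Open Scope ring_scope.

Definition pauli_x : 'M[algC]_2 := \matrix_(i < 2, j < 2)
  (if i == j then 0 else 1).
Definition pauli_y : 'M[algC]_2 := \matrix_(i < 2, j < 2)
  (if i == j then 0 else if (i : nat) == 0%N then - 'i else 'i).
Definition pauli_z : 'M[algC]_2 := \matrix_(i < 2, j < 2)
  (if i == j then (if (i : nat) == 0%N then 1 else -1) else 0).
Definition id2 : 'M[algC]_2 := 1%:M.

(* Kronecker product: tau acts on the first factor, sigma on the second.
   'M_(2*2) is convertible to 'M_4. *)
Definition kron (A B : 'M[algC]_2) : 'M[algC]_4 := tensmx A B.

Inductive btype := Ba | Bb | Bc.

Definition Umat (al : btype) : 'M[algC]_4 :=
  match al with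
  | Ba => kron pauli_y id2
  | Bb => - kron pauli_x pauli_z
  | Bc => - kron pauli_x pauli_y
  end.

Definition hadj (M : 'M[algC]_4) : 'M[algC]_4 := (map_mx conjC M)^T.

Section Honeycomb.
Variables (L1 L2 : nat) (h1 : (0 < L1)%N) (h2 : (0 < L2)%N).

(* a site: sublattice flag (false = A, true = B) and cell R = (m1, m2)
   with m_mu in Z / L_mu Z *)
Definition site := (bool * ('I_L1 * 'I_L2))%type.

(* the site X(n1 a1 + n2 a2) for natural numbers n1 n2, reduced mod L *)
Definition mksite (s : bool) (n1 n2 : nat) : site :=
  (s, (Ordinal (ltn_pmod n1 h1), Ordinal (ltn_pmod n2 h2))).
Definition siteA := mksite false.
Definition siteB := mksite true.

(* bond type between A(R) and B(R'):  c if R' = R, a if R' = R - a1,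
   b if R' = R - a2 (equivalently R = R' + a1, resp. R' + a2). *)
Definition bondAB (x y : 'I_L1 * 'I_L2) : option btype :=
  if y == x then Some Bc
  else if siteA (y.1 + 1) y.2 == (false, x) then Some Ba
  else if siteA y.1 (y.2 + 1) == (false, x) then Some Bb
  else None.

Definition bond (i j : site) : option btype :=
  match i, j with
  | (false, x), (true, y) => bondAB x y
  | (true, y), (false, x) => bondAB x y
  | _, _ => None
  end.

Definition adjacent (i j : site) : bool := if bond i j is Some _ then true else false.

Definition U (i j : site) : 'M[algC]_4 :=
  if bond i j is Some al then Umat al else 0.

(* ordered product of a function of consecutive pairs along a path
   [:: i0; i1; ...; in] : F i0 i1 * F i1 i2 * ... * F i(n-1) in *)
Definition pathprod (Rg : pzRingType) (F : site -> site -> Rg) (p : seq site) : Rg :=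
  \prod_(e <- zip p (behead p)) F e.1 e.2.

(* C1 : A(0) -> B(0) -> A(a1) -> B(a1) -> ... -> A(L1 a1) = A(0) *)
Definition C1 : seq site :=
  mkseq (fun k => mksite (odd k) k./2 0) (L1.*2).+1.
(* C2 : A(0) -> B(0) -> A(a2) -> B(a2) -> ... -> A(L2 a2) = A(0) *)
Definition C2 : seq site :=
  mkseq (fun k => mksite (odd k) 0 k./2) (L2.*2).+1.

(* the elementary hexagon attached to cell R = n1 a1 + n2 a2:
   A(R) -c- B(R) -a- A(R+a1) -b- B(R+a1-a2) -c- A(R+a1-a2) -a- B(R-a2) -b- A(R) *)
Definition hexagon (n1 n2 : nat) : seq site :=
  [:: siteA n1 n2; siteB n1 n2; siteA n1.+1 n2; siteB n1.+1 (n2 + L2).-1;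
      siteA n1.+1 (n2 + L2).-1; siteB n1 (n2 + L2).-1; siteA n1 n2].

End Honeycomb.

(* Main.v *)
Require Import Defs.
From HB Require Import structures.
From mathcomp Require Import all_boot all_order all_algebra.
From mathcomp Require Import algC spectral sesquilinear.
From mathcomp Require Import mxtens.
Import Order.TTheory GRing.Theory Num.Theory.
Local Open Scope ring_scope.

Set Implicit Arguments.
Unset Strict Implicit.
Local Open Scope sesquilinear_scope.


Lemma ii : 'i * 'i = -1 :> algC. Proof. by rewrite -expr2 sqrCi. Qed.

Ltac m2 := apply/matrixP => [[[|[|//]] Hi] [[|[|//]] Hj]]; rewrite !(mxE, big_ord_recl, big_ord0) /= ?mxE /=;
  rewrite ?(mul0r, mulr0, add0r, addr0, mul1r, mulr1, mulrN, mulNr, opprK, ii, oppr0, subr0, sub0r, rmorph0, rmorph1, rmorphN, conjCi) //=;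
  rewrite ?conjCi ?(mul0r, mulr0, add0r, addr0, mul1r, mulr1, mulrN, mulNr, opprK, ii, oppr0, subr0, sub0r) //.

Lemma kronM (A B C D : 'M[algC]_2) : kron A B *m kron C D = kron (A *m C) (B *m D).
Proof. exact: (@tensmx_mul _ 2 2 2 2 2 2 A B C D). Qed.

Lemma kron1 : kron id2 id2 = 1%:M.
Proof.
apply/matrixP => i j.
case: (@mxtens_indexP 2 2 i) => i0 i1; case: (@mxtens_indexP 2 2 j) => j0 j1.
rewrite /kron (@tensmxE _ 2 2 2 2) /id2 !mxE.
have -> : (mxtens_index (i0,i1) == mxtens_index (j0,j1) :> 'I_4) = ((i0,i1) == (j0,j1)).
  by apply: inj_eq; exact: (can_inj (@mxtens_indexK 2 2)).
rewrite xpair_eqE.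
by case: (i0 == j0); case: (i1 == j1); rewrite ?mul1r ?mul0r.
Qed.

Lemma kronN (A B : 'M[algC]_2) : kron (-A) B = - kron A B.
Proof. by apply/matrixP => i j; rewrite !mxE mulNr. Qed.

Lemma kron_hadj (A B : 'M[algC]_2) : (kron A B)^t* = kron (A^t*) (B^t*).
Proof. by apply/matrixP => i j; rewrite !mxE rmorphM. Qed.

Definition Ua := Umat Ba.
Definition Ub := Umat Bb.
Definition Uc := Umat Bc.

Lemma UbE : Ub = kron (-pauli_x) pauli_z. Proof. by rewrite /Ub /= kronN. Qed.
Lemma UcE : Uc = kron (-pauli_x) pauli_y. Proof. by rewrite /Uc /= kronN. Qed.
Lemma UaE : Ua = kron pauli_y id2. Proof. by []. Qed.

Lemma m1E : - 1%:M = kron (-id2) id2 :> 'M[algC]_4.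
Proof. by rewrite kronN kron1. Qed.

Lemma kronN2 (A B : 'M[algC]_2) : kron A (-B) = - kron A B.
Proof. by apply/matrixP => i j; rewrite !mxE mulrN. Qed.
Lemma m1E' : - 1%:M = kron id2 (-id2) :> 'M[algC]_4.
Proof. by rewrite kronN2 kron1. Qed.

Ltac kr := rewrite ?UaE ?UbE ?UcE -?kron1 ?mulmxA ?kronM -?kronN; congr (kron _ _);
  rewrite /pauli_x /pauli_y /pauli_z /id2; m2.

Ltac kr2 := rewrite ?UaE ?UbE ?UcE -?kron1 ?mulmxA ?kronM -?kronN2; congr (kron _ _);
  rewrite /pauli_x /pauli_y /pauli_z /id2; m2.
Lemma UaUa : Ua *m Ua = 1%:M. Proof. kr. Qed.
Lemma UbUb : Ub *m Ub = 1%:M. Proof. kr. Qed.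
Lemma UcUc : Uc *m Uc = 1%:M. Proof. kr. Qed.
Lemma XX : (Uc *m Ua) *m (Uc *m Ua) = - 1%:M. Proof. kr. Qed.
Lemma YY : (Uc *m Ub) *m (Uc *m Ub) = - 1%:M. Proof. rewrite m1E'. kr. Qed.
Lemma YX : (Uc *m Ub) *m (Uc *m Ua) = - ((Uc *m Ua) *m (Uc *m Ub)).
Proof. kr2. Qed.
Lemma Wk : Uc *m Ua *m Ub = kron (- pauli_y) ('i *: pauli_x).
Proof. kr. Qed.
Lemma hexU : Uc *m (Ua *m (Ub *m (Uc *m (Ua *m (Ub *m 1%:M))))) = - 1%:M.
Proof.
have E : forall T : 'M[algC]_4, Uc *m (Ua *m (Ub *m T)) = (Uc *m Ua *m Ub) *m T by move=> T; rewrite !mulmxA.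
rewrite !E mulmx1 Wk kronM m1E'; congr (kron _ _); rewrite /pauli_x /pauli_y /pauli_z /id2; m2.
Qed.
Lemma kron_unitE (A B : 'M[algC]_2) : kron A B *m (kron A B)^t* = kron (A *m A^t*) (B *m B^t*).
Proof. by rewrite kron_hadj kronM. Qed.

Ltac ku := apply/unitarymxP; rewrite ?UaE ?UbE ?UcE; apply: etrans (kron_unitE _ _) _;
  rewrite -kron1; congr (kron _ _); rewrite /pauli_x /pauli_y /pauli_z /id2; m2.

Lemma Ua_unit : Ua \is unitarymx. Proof. ku. Qed.
Lemma Ub_unit : Ub \is unitarymx. Proof. ku. Qed.
Lemma Uc_unit : Uc \is unitarymx. Proof. ku. Qed.

Notation R4 := 'M[algC]_4.
Definition X : R4 := Uc * Ua.
Definition Y : R4 := Uc * Ub.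

Lemma r1 (A B : R4) : A *m B = 1%:M -> A * B = 1.
Proof. by rewrite mulmxE idmxE. Qed.
Lemma UaUar : Ua * Ua = 1. Proof. exact: r1 UaUa. Qed.
Lemma UbUbr : Ub * Ub = 1. Proof. exact: r1 UbUb. Qed.
Lemma UcUcr : Uc * Uc = 1. Proof. exact: r1 UcUc. Qed.
Lemma XXr : X * X = -1. Proof. by have := XX; rewrite mulmxE idmxE. Qed.
Lemma YYr : Y * Y = -1. Proof. by have := YY; rewrite mulmxE idmxE. Qed.
Lemma YXr : Y * X = - (X * Y). Proof. by have := YX; rewrite mulmxE. Qed.

Lemma X4 : X ^+ 4 = 1.
Proof. by rewrite -[X ^+ 4]/(X ^+ (2 + 2)) exprD expr2 XXr mulrNN mulr1. Qed.
Lemma Y4 : Y ^+ 4 = 1.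
Proof. by rewrite -[Y ^+ 4]/(Y ^+ (2 + 2)) exprD expr2 YYr mulrNN mulr1. Qed.

Lemma expmod4 (Z : R4) m n : Z ^+ 4 = 1 -> m = n %[mod 4] -> Z ^+ m = Z ^+ n.
Proof.
move=> Z4 e.
rewrite (divn_eq m 4) (divn_eq n 4) e !exprD ![(_ * 4)%N]mulnC !exprM Z4 !expr1n.
by rewrite !mul1r.
Qed.

Lemma YnX n : Y ^+ n * X = (-1) ^+ n * (X * Y ^+ n).
Proof.
elim: n => [|n IH]; first by rewrite !expr0 !mul1r !mulr1.
have E : Y ^+ n.+1 * X = - (Y ^+ n * X * Y).
  by rewrite exprSr -mulrA YXr mulrN mulrA.
by rewrite E IH (exprSr (-1)) (exprSr Y) mulrN1 mulNr -!mulrA.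
Qed.

Lemma unit1 : (1 : R4) \is unitarymx.
Proof. by apply/unitarymxP; rewrite -idmxE trmx1 map_mx1 mulmx1. Qed.

Lemma unitM (A B : R4) : A \is unitarymx -> B \is unitarymx -> A * B \is unitarymx.
Proof. exact: mul_unitarymx. Qed.

Lemma unitX (A : R4) n : A \is unitarymx -> A ^+ n \is unitarymx.
Proof. by move=> uA; elim: n => [|n IH]; rewrite ?expr0 ?unit1 // exprS unitM. Qed.

Lemma X_unit : X \is unitarymx. Proof. by rewrite unitM ?Uc_unit ?Ua_unit. Qed.
Lemma Y_unit : Y \is unitarymx. Proof. by rewrite unitM ?Uc_unit ?Ub_unit. Qed.

Lemma sgn_mx n : ((-1) ^+ n : algC)%:M = (-1) ^+ n :> R4.
Proof.
elim: n => [|n IH]; first by rewrite !expr0 idmxE.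
by rewrite !exprS scalar_mxM mulmxE IH raddfN /= idmxE.
Qed.

Lemma sgn_pm n : ((-1) ^+ n : algC) = 1 \/ ((-1) ^+ n : algC) = -1.
Proof. by rewrite -signr_odd; case: (odd n); [right|left]; rewrite ?expr1 ?expr0. Qed.

Lemma relP (gi gj V : R4) (s : algC) : gj \is unitarymx -> gi * V = s%:M * gj ->
  gi *m V *m gj^t* = s%:M.
Proof.
move=> /unitarymxP u E.
have u' : gj * gj^t* = 1 by rewrite -mulmxE u idmxE.
by rewrite mulmxE E -mulrA u' mulr1.
Qed.

Lemma scM (a b : algC) : a%:M * b%:M = (a * b)%:M :> R4.
Proof. by rewrite scalar_mxM mulmxE. Qed.

Lemma revP (gi gj V : R4) (s : algC) : V * V = 1 -> s * s = 1 ->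
  gi * V = s%:M * gj -> gj * V = s%:M * gi.
Proof.
move=> VV ss E.
have -> : gj = s%:M * (gi * V) by rewrite E mulrA scM ss idmxE mul1r.
by rewrite -mulrA -mulrA VV mulr1.
Qed.

Definition gA L1 L2 (x : 'I_L1 * 'I_L2) : R4 := X ^+ x.1 * Y ^+ x.2.
Definition gs L1 L2 (i : site L1 L2) : R4 := if i.1 then gA i.2 * Uc else gA i.2.

Definition etaAB L1 L2 (h1 : (0 < L1)%N) (h2 : (0 < L2)%N) (x y : 'I_L1 * 'I_L2) : algC :=
  match bondAB h1 h2 x y with Some Ba => (-1) ^+ y.2 | Some _ => 1 | None => 0 end.
Definition etaF L1 L2 (h1 : (0 < L1)%N) (h2 : (0 < L2)%N) (i j : site L1 L2) : algC :=
  match i, j with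
  | (false, x), (true, y) => etaAB h1 h2 x y
  | (true, y), (false, x) => etaAB h1 h2 x y
  | _, _ => 0 end.

Definition Uo (o : option btype) : R4 := if o is Some al then Umat al else 0.

Lemma gA_unit L1 L2 (x : 'I_L1 * 'I_L2) : gA x \is unitarymx.
Proof. by rewrite /gA unitM ?unitX ?X_unit ?Y_unit. Qed.
Lemma gs_unit L1 L2 (i : site L1 L2) : gs i \is unitarymx.
Proof. destruct i as [[] x]; [apply: unitM; [exact: gA_unit|exact: Uc_unit] | exact: gA_unit]. Qed.

Lemma ssq n : ((-1) ^+ n : R4) * (-1) ^+ n = 1.
Proof. by rewrite -exprD addnn -mul2n exprM sqrrN !expr1n. Qed.

Lemma stepA (m n : nat) : X ^+ m * X * Y ^+ n * Ua = (-1) ^+ n * (X ^+ m * Y ^+ n * Uc).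
Proof.
have e1 : X ^+ m * Y ^+ n * Uc = X ^+ m * (Y ^+ n * X) * Ua.
  by rewrite /X !mulrA -(mulrA _ Ua Ua) UaUar mulr1.
rewrite e1 YnX.
have e2 : forall Z, X ^+ m * ((-1) ^+ n * Z) = (-1) ^+ n * (X ^+ m * Z).
  by move=> Z; rewrite mulrA (commr_sign (X ^+ m) n) -mulrA.
by rewrite e2 -!mulrA (mulrA ((-1) ^+ n) ((-1) ^+ n)) ssq mul1r.
Qed.

Lemma stepB (m n : nat) : X ^+ m * (Y ^+ n * Y) * Ub = X ^+ m * Y ^+ n * Uc.
Proof. by rewrite /Y !mulrA -(mulrA _ Ub Ub) UbUbr mulr1. Qed.

Lemma relA L1 L2 (h1 : (0 < L1)%N) (h2 : (0 < L2)%N) (d1 : (4 %| L1)%N) (d2 : (4 %| L2)%N)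
  (x y : 'I_L1 * 'I_L2) :
  gA x * Uo (bondAB h1 h2 x y) = (etaAB h1 h2 x y)%:M * (gA y * Uc).
Proof.
rewrite /etaAB /bondAB.
case: eqP => [->|_]; first by rewrite /= idmxE mul1r.
case: eqP => [|_].
  rewrite /siteA /mksite; case=> <-; rewrite /= sgn_mx /gA /=.
  rewrite (modn_small (ltn_ord y.2)).
  rewrite (@expmod4 X ((y.1 + 1) %% L1) (y.1 + 1)); last by rewrite (modn_dvdm _ d1).
  2: exact: X4.
  by rewrite -UaE exprD expr1 stepA.
case: eqP => [|_]; last by rewrite /= mulr0 raddf0 mul0r.
rewrite /siteA /mksite; case=> <-; rewrite /= idmxE mul1r /gA /=.
rewrite (modn_small (ltn_ord y.1)) -/Ub.
rewrite (@expmod4 Y ((y.2 + 1) %% L2) (y.2 + 1)); last by rewrite (modn_dvdm _ d2).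
  by rewrite addn1 exprSr stepB.
exact: Y4.
Qed.

Lemma modS_neq L c : (1 < L)%N -> (c %% L == c.+1 %% L)%N = false.
Proof.
move=> L1; apply/negbTE.
by rewrite -addn1 -[X in (X %% L == _)%N]addn0 eqn_modDl mod0n (modn_small L1).
Qed.

Lemma ordE n (i j : 'I_n) : (i == j) = (val i == val j).
Proof. by []. Qed.

Ltac bsimp := rewrite /U /bond /siteA /siteB /mksite /bondAB /= ?xpair_eqE ?eqxx /= ?ordE /=.

Lemma bond_c L1 L2 (h1 : (0 < L1)%N) (h2 : (0 < L2)%N) a b c d :
  (a %% L1 = c %% L1)%N -> (b %% L2 = d %% L2)%N ->
  U h1 h2 (siteA h1 h2 a b) (siteB h1 h2 c d) = Uc.
Proof. move=> ea eb. bsimp. rewrite ea eb !eqxx. done. Qed.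



Lemma bond_a L1 L2 (h1 : (0 < L1)%N) (h2 : (0 < L2)%N) a b c d : (1 < L1)%N ->
  (a %% L1 = c.+1 %% L1)%N -> (b %% L2 = d %% L2)%N ->
  U h1 h2 (siteA h1 h2 a b) (siteB h1 h2 c d) = Ua.
Proof.
move=> l1 ea eb. bsimp. rewrite ea eb (modS_neq c l1) modnDml addn1 !modn_mod !eqxx.
reflexivity.
Qed.

Lemma bond_b L1 L2 (h1 : (0 < L1)%N) (h2 : (0 < L2)%N) a b c d : (1 < L1)%N -> (1 < L2)%N ->
  (a %% L1 = c %% L1)%N -> (b %% L2 = d.+1 %% L2)%N ->
  U h1 h2 (siteA h1 h2 a b) (siteB h1 h2 c d) = Ub.
Proof.
move=> l1 l2 ea eb. bsimp. rewrite ea eb (modS_neq d l2) andbF !modnDml !addn1 !modn_mod !eqxx.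
rewrite eq_sym (modS_neq c l1) /=.
reflexivity.
Qed.

Lemma U_sym L1 L2 (h1 : (0 < L1)%N) (h2 : (0 < L2)%N) (i j : site L1 L2) :
  U h1 h2 i j = U h1 h2 j i.
Proof. destruct i as [[] x]; destruct j as [[] y]; reflexivity. Qed.

Lemma sgn_sq n : ((-1) ^+ n : algC) * (-1) ^+ n = 1.
Proof. by rewrite -exprD addnn -mul2n exprM sqrrN !expr1n. Qed.

Lemma UmatUmat al : Umat al * Umat al = 1.
Proof. case: al; [exact: UaUar | exact: UbUbr | exact: UcUcr]. Qed.

Lemma rel L1 L2 (h1 : (0 < L1)%N) (h2 : (0 < L2)%N) (d1 : (4 %| L1)%N) (d2 : (4 %| L2)%N)
  (i j : site L1 L2) : gs i *m U h1 h2 i j *m (gs j)^t* = (etaF h1 h2 i j)%:M.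
Proof.
destruct i as [[] x]; destruct j as [[] y].
- have -> : U h1 h2 (true, x) (true, y) = 0 by [].
  by rewrite mulmx0 mul0mx /etaF raddf0.
- have HA := relA h1 h2 d1 d2 y x.
  change ((gA x * Uc) *m Uo (bondAB h1 h2 y x) *m (gA y)^t* = (etaAB h1 h2 y x)%:M).
  move: HA; rewrite /etaAB; case: (bondAB h1 h2 y x) => [al|] /= HA; last first.
    by rewrite mulmx0 mul0mx raddf0.
  apply: relP; first exact: gA_unit.
  apply: (revP _ _ HA); first exact: UmatUmat.
  by case: al {HA} => /=; [exact: sgn_sq | exact: mulr1 | exact: mulr1].
- apply: relP; [exact: (gs_unit (true, y)) | exact: relA].
- have -> : U h1 h2 (false, x) (false, y) = 0 by [].
  by rewrite mulmx0 mul0mx /etaF raddf0.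
Qed.

Lemma eta_sym L1 L2 (h1 : (0 < L1)%N) (h2 : (0 < L2)%N) (i j : site L1 L2) :
  etaF h1 h2 i j = etaF h1 h2 j i.
Proof. by destruct i as [[] x]; destruct j as [[] y]. Qed.

Lemma eta_pm L1 L2 (h1 : (0 < L1)%N) (h2 : (0 < L2)%N) (i j : site L1 L2) :
  adjacent h1 h2 i j -> etaF h1 h2 i j = 1 \/ etaF h1 h2 i j = -1.
Proof.
destruct i as [[] x]; destruct j as [[] y] => //=; rewrite /adjacent /= /etaAB;
  case: bondAB => // -[] _; by [left | exact: sgn_pm].
Qed.

Lemma pathprod_cons (Rg : pzRingType) L1 L2 (F : site L1 L2 -> site L1 L2 -> Rg) x y s :
  pathprod F (x :: y :: s) = F x y * pathprod F (y :: s).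
Proof. by rewrite /pathprod /= big_cons. Qed.

Lemma pathprod_1 (Rg : pzRingType) L1 L2 (F : site L1 L2 -> site L1 L2 -> Rg) x :
  pathprod F [:: x] = 1.
Proof. by rewrite /pathprod /= big_nil. Qed.

Lemma path_eta L1 L2 (h1 : (0 < L1)%N) (h2 : (0 < L2)%N) (d1 : (4 %| L1)%N) (d2 : (4 %| L2)%N)
  (p : seq (site L1 L2)) x :
  (pathprod (etaF h1 h2) (x :: p))%:M = gs x *m pathprod (U h1 h2) (x :: p) *m (gs (last x p))^t*.
Proof.
elim: p x => [|y p IH] x.
  rewrite !pathprod_1 /= -idmxE mulmx1.
  by have /unitarymxP -> := gs_unit x.
rewrite !pathprod_cons /= scalar_mxM IH -(rel h1 h2 d1 d2 x y).
rewrite -!mulmxA; congr (_ *m (_ *m _)).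
have HU : (gs y)^t* *m gs y = 1%:M.
  by rewrite -[(gs y)^t*]mul1mx mulmxKtV // gs_unit.
by rewrite !mulmxA HU mul1mx.
Qed.

Lemma loop_eta L1 L2 (h1 : (0 < L1)%N) (h2 : (0 < L2)%N) (d1 : (4 %| L1)%N) (d2 : (4 %| L2)%N)
  (p : seq (site L1 L2)) x (c : algC) :
  last x p = x -> pathprod (U h1 h2) (x :: p) = c%:M -> pathprod (etaF h1 h2) (x :: p) = c.
Proof.
move=> hl hp; have := path_eta h1 h2 d1 d2 p x; rewrite hl hp.
rewrite mul_mx_scalar -scalemxAl.
have /unitarymxP -> := gs_unit x.
rewrite scalemx1 => /matrixP/(_ 0 0); rewrite !mxE /= !mulr1n; done.
Qed.

Lemma mkseqSl (T : Type) (f : nat -> T) n : mkseq f n.+1 = f 0%N :: mkseq (fun i => f i.+1) n.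
Proof. by rewrite /mkseq /= -add1n iotaDl -map_comp. Qed.

Lemma last_mkseq (T : Type) (f : nat -> T) n : last (f 0%N) (mkseq (fun i => f i.+1) n) = f n.
Proof.
elim: n f => [|n IH] f //.
by rewrite mkseqSl /= (IH (fun i => f i.+1)).
Qed.

Lemma pathprod_mkseq (Rg : pzRingType) L1 L2 (F : site L1 L2 -> site L1 L2 -> Rg) f n :
  pathprod F (mkseq f n.+1) = \prod_(0 <= i < n) F (f i) (f i.+1).
Proof.
elim: n f => [|n IH] f; first by rewrite pathprod_1 big_geq.
by rewrite mkseqSl (mkseqSl (fun i => f i.+1)) pathprod_cons -(mkseqSl (fun i => f i.+1)) IH big_nat_recl.
Qed.

Lemma mksite_eq L1 L2 (h1 : (0 < L1)%N) (h2 : (0 < L2)%N) s a b a' b' :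
  (a %% L1 = a' %% L1)%N -> (b %% L2 = b' %% L2)%N -> mksite h1 h2 s a b = mksite h1 h2 s a' b'.
Proof. by move=> ea eb; rewrite /mksite; congr (_, (_, _)); apply: val_inj. Qed.

Lemma gt1 L (h : (0 < L)%N) (d : (4 %| L)%N) : (1 < L)%N.
Proof. by have := dvdn_leq h d; apply: leq_trans. Qed.

Lemma halfS2 n : ((n.*2).+1)./2 = n.
Proof. by rewrite -add1n -[1%N]/(nat_of_bool true) half_bit_double. Qed.

Lemma C1_U L1 L2 (h1 : (0 < L1)%N) (h2 : (0 < L2)%N) (d1 : (4 %| L1)%N) :
  pathprod (U h1 h2) (C1 h1 h2) = 1%:M.
Proof.
rewrite /C1 pathprod_mkseq.
have l1 := gt1 h1 d1.
set f := fun k => mksite h1 h2 (odd k) k./2 0.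
suff Q : forall n, \prod_(0 <= i < n.*2) U h1 h2 (f i) (f i.+1) = X ^+ n.
  rewrite Q (@expmod4 X L1 0 X4); first by rewrite expr0 idmxE.
  by rewrite mod0n; apply/eqP.
elim=> [|n IH]; first by rewrite big_geq // expr0.
rewrite doubleS big_nat_recr // big_nat_recr // IH.
have e0 : f n.*2 = siteA h1 h2 n 0 by rewrite /f odd_double doubleK.
have e1 : f (n.*2).+1 = siteB h1 h2 n 0 by rewrite /f halfS2 /= odd_double.
have e2 : f (n.*2).+2 = siteA h1 h2 n.+1 0 by rewrite /f /= negbK odd_double doubleK.
rewrite e0 e1 e2 (bond_c h1 h2 (erefl _) (erefl _)) (U_sym h1 h2 (siteB h1 h2 n 0)).
rewrite (bond_a h1 h2 l1 (erefl _) (erefl _)).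
by rewrite exprSr; symmetry; exact: mulrA.
Qed.

Lemma C2_U L1 L2 (h1 : (0 < L1)%N) (h2 : (0 < L2)%N) (d1 : (4 %| L1)%N) (d2 : (4 %| L2)%N) :
  pathprod (U h1 h2) (C2 h1 h2) = 1%:M.
Proof.
rewrite /C2 pathprod_mkseq.
have l1 := gt1 h1 d1; have l2 := gt1 h2 d2.
set f := fun k => mksite h1 h2 (odd k) 0 k./2.
suff Q : forall n, \prod_(0 <= i < n.*2) U h1 h2 (f i) (f i.+1) = Y ^+ n.
  rewrite Q (@expmod4 Y L2 0 Y4); first by rewrite expr0 idmxE.
  by rewrite mod0n; apply/eqP.
elim=> [|n IH]; first by rewrite big_geq // expr0.
rewrite doubleS big_nat_recr // big_nat_recr // IH.
have e0 : f n.*2 = siteA h1 h2 0 n by rewrite /f odd_double doubleK.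
have e1 : f (n.*2).+1 = siteB h1 h2 0 n by rewrite /f halfS2 /= odd_double.
have e2 : f (n.*2).+2 = siteA h1 h2 0 n.+1 by rewrite /f /= negbK odd_double doubleK.
rewrite e0 e1 e2 (bond_c h1 h2 (erefl _) (erefl _)) (U_sym h1 h2 (siteB h1 h2 0 n)).
rewrite (bond_b h1 h2 l1 l2 (erefl _) (erefl _)).
by rewrite exprSr; symmetry; exact: mulrA.
Qed.

Lemma hex_U L1 L2 (h1 : (0 < L1)%N) (h2 : (0 < L2)%N) (d1 : (4 %| L1)%N) (d2 : (4 %| L2)%N) n1 n2 :
  pathprod (U h1 h2) (hexagon h1 h2 n1 n2) = - 1%:M.
Proof.
have l1 := gt1 h1 d1; have l2 := gt1 h2 d2.
set p := (n2 + L2).-1.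
have ep : (n2 %% L2 = p.+1 %% L2)%N by rewrite /p prednK ?modnDr // addn_gt0 h2 orbT.
rewrite /hexagon -/p !pathprod_cons pathprod_1.
rewrite (@bond_c _ _ h1 h2 n1 n2 n1 n2 (erefl _) (erefl _)).
rewrite (U_sym h1 h2 (siteB h1 h2 n1 n2)) (@bond_a _ _ h1 h2 n1.+1 n2 n1 n2 l1 (erefl _) (erefl _)).
rewrite (@bond_b _ _ h1 h2 n1.+1 n2 n1.+1 p l1 l2 (erefl _) ep).
rewrite (U_sym h1 h2 (siteB h1 h2 n1.+1 p)) (@bond_c _ _ h1 h2 n1.+1 p n1.+1 p (erefl _) (erefl _)).
rewrite (@bond_a _ _ h1 h2 n1.+1 p n1 p l1 (erefl _) (erefl _)).
rewrite (U_sym h1 h2 (siteB h1 h2 n1 p)) (@bond_b _ _ h1 h2 n1 n2 n1 p l1 l2 (erefl _) ep).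
exact: hexU.
Qed.

Unset Implicit Arguments.
Set Strict Implicit.
Local Close Scope sesquilinear_scope.

Theorem mainTheorem4 (L1 L2 : nat) (h1 : (0 < L1)%N) (h2 : (0 < L2)%N)
    (d1 : (4 %| L1)%N) (d2 : (4 %| L2)%N) :
  [/\ pathprod (U h1 h2) (C1 h1 h2) = 1%:M,
      pathprod (U h1 h2) (C2 h1 h2) = 1%:M,
      (forall m1 : 'I_L1, forall m2 : 'I_L2,
         pathprod (U h1 h2) (hexagon h1 h2 m1 m2) = - 1%:M) &
      exists (g : site L1 L2 -> 'M[algC]_4) (eta : site L1 L2 -> site L1 L2 -> algC),
        [/\ (forall j, g j \is unitarymx),
            (forall i j, adjacent h1 h2 i j ->
               [/\ eta i j = eta j i, eta i j = 1 \/ eta i j = -1 &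
                   g i *m U h1 h2 i j *m hadj (g j) = (eta i j)%:M]),
            (forall m1 : 'I_L1, forall m2 : 'I_L2,
               pathprod eta (hexagon h1 h2 m1 m2) = -1),
            pathprod eta (C1 h1 h2) = 1 &
            pathprod eta (C2 h1 h2) = 1]].
Proof.
split.
- exact: C1_U.
- exact: C2_U.
- by move=> m1 m2; exact: hex_U.
exists (@gs L1 L2), (etaF h1 h2); split.
- by move=> j; exact: gs_unit.
- move=> i j adj; split; [exact: eta_sym | exact: eta_pm | ].
  rewrite /hadj map_trmx; exact: rel.
- move=> m1 m2; have H := hex_U h1 h2 d1 d2 m1 m2.
  move: H; rewrite -[- 1%:M](raddfN (@scalar_mx _ 4)) /hexagon => H.
  by apply: (@loop_eta _ _ h1 h2 d1 d2 _ _ _ _ H).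
- have H := C1_U h1 h2 d1; move: H; rewrite /C1 mkseqSl => H.
  apply: (@loop_eta _ _ h1 h2 d1 d2 _ _ _ _ H).
  rewrite (last_mkseq (fun k => mksite h1 h2 (odd k) k./2 0)) odd_double doubleK.
  by apply: mksite_eq; rewrite ?modnn ?mod0n.
- have H := C2_U h1 h2 d1 d2; move: H; rewrite /C2 mkseqSl => H.
  apply: (@loop_eta _ _ h1 h2 d1 d2 _ _ _ _ H).
  rewrite (last_mkseq (fun k => mksite h1 h2 (odd k) 0 k./2)) odd_double doubleK.
  by apply: mksite_eq; rewrite ?modnn ?mod0n.
Qed.
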